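(* For every $n\ge 2$, $f(n,n-1)=f(n+1,n-1)-f(n,n-2)$.
   Context: A complete non-ambiguous matrix (CNM) of size $n$ is an $n\times n$ matrix $M=(m_{i,j})$ with entries in $\{0,1\}$ whose support $T=\{(i,j): m_{i,j}=1\}$ (whose elements are called vertices) satisfies: (1) $(1,1)\in T$; (2) for every $p=(i,j)\in T$ with $p\neq(1,1)$, exactly one of the following holds: there is $(i',j)\in T$ with $i'<i$, or there is $(i,j')\in T$ with $j'<j$; (3) every row and every column of $M$ contains at least one vertex; (4) define the parent of $p=(i,j)\neq(1,1)$ to be $(i',j)$ with $i'<i$ maximal if such a vertex exists, and otherwise $(i,j')$ with $j'<j$ maximal; then every vertex is the parent of either zero or exactly two vertices. A vertex with no children is a leaf. A CNM of size $n$ is upper-diagonal if its leaves are exactly the positions $(i,n+1-i)$, $1\le i\le n$. For $n\ge 2$ and $0\le k\le n-2$, $f(n,k)$ is the number of upper-diagonal CNMs $M$ of size $n$ with $m_{i,n-i}=0$ for $1\le i\le k$ and $m_{k+1,n-k-1}=1$; $f(n,n-1)$ is the number of upper-diagonal CNMs of size $n$ with $m_{i,n-i}=0$ for all $1\le i\le n-1$; by convention $f(n,-1)=0$. *)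

(* Defs.v *)
From mathcomp Require Import all_boot.
Set Implicit Arguments. Unset Strict Implicit. Unset Printing Implicit Defensive.

(* Convention: a matrix of size n is
   represented by its support T : {set 'I_n * 'I_n}, with 0-based indices:
   the pair (i, j) stands for the paper's position (i+1, j+1). *)

Section CNM.
Variable n : nat.
Implicit Types (T : {set 'I_n * 'I_n}) (p q r : 'I_n * 'I_n).

Definition inT T (a b : nat) : bool :=
  [exists p in T, (p.1 == a :> nat) && (p.2 == b :> nat)].

Definition is_root p : bool := (p.1 == 0 :> nat) && (p.2 == 0 :> nat).

Definition has_above T p : bool :=
  [exists q in T, (q.2 == p.2) && (q.1 < p.1)].
Definition has_left T p : bool :=
  [exists q in T, (q.1 == p.1) && (q.2 < p.2)].

Definition parent_of T q p : bool :=
  [&& p \in T, q \in T, ~~ is_root p &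
   if has_above T p then
     [&& q.2 == p.2, q.1 < p.1 &
        [forall r in T, (r.2 == p.2) && (r.1 < p.1) ==> (r.1 <= q.1)]]
   else
     [&& q.1 == p.1, q.2 < p.2 &
        [forall r in T, (r.1 == p.1) && (r.2 < p.2) ==> (r.2 <= q.2)]]].

Definition children T q : {set 'I_n * 'I_n} := [set p | parent_of T q p].

Definition is_CNM T : bool :=
  [&& inT T 0 0,
      [forall p in T, ~~ is_root p ==> (has_above T p != has_left T p)],
      [forall i : 'I_n, [exists p in T, p.1 == i]] &&
                [forall j : 'I_n, [exists p in T, p.2 == j]] &
      [forall q in T, (#|children T q| == 0) || (#|children T q| == 2)]].

Definition is_leaf T q : bool := (q \in T) && (#|children T q| == 0).

(* leaves are exactly the paper's positions (i, n+1-i), 1 <= i <= n,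
   i.e. the 0-based positions (a, b) with a + b = n - 1 *)
Definition upper_diagonal T : bool :=
  [forall p, is_leaf T p == (p.1 + p.2 == n.-1)].

Definition is_UDCNM T : bool := is_CNM T && upper_diagonal T.

End CNM.

(* f n k for 0 <= k <= n-1 (n >= 2): paper's m_{i,n-i} = 0 for 1 <= i <= k
   (0-based position (i-1, n-1-i)), and, when k <= n-2, m_{k+1,n-k-1} = 1
   (0-based position (k, n-2-k)). For k = n-1 this is the paper's f(n,n-1). *)
Definition f (n k : nat) : nat :=
  #|[set T : {set 'I_n * 'I_n} |
      [&& is_UDCNM T,
          [forall a : 'I_k, ~~ inT T a (n - 2 - a)] &
          (k < n.-1) ==> inT T k (n - 2 - k)]]|.

(* Main.v *)
Require Import Defs.
From mathcomp Require Import all_boot all_order all_algebra.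
From mathcomp Require Import zify.
Set Implicit Arguments. Unset Strict Implicit. Unset Printing Implicit Defensive.

Lemma peq k (p q : 'I_k * 'I_k) : (p == q) = (p.1 == q.1 :> nat) && (p.2 == q.2 :> nat).
Proof. by case: p q => [a b] [c d]. Qed.
Lemma oeq k (i j : 'I_k) : (i == j) = (i == j :> nat).
Proof. by []. Qed.

Definition sh (b : nat) := if b == 0 then 0 else b.+1.
Lemma sh_eq a b : (sh a == sh b) = (a == b).
Proof. by rewrite /sh; case: (a =P 0); case: (b =P 0) => ? ? ; apply/eqP/eqP; lia. Qed.
Lemma sh_lt a b : (sh a < sh b) = (a < b).
Proof. by rewrite /sh; case: (a =P 0); case: (b =P 0) => ? ? ; apply/idP/idP; lia. Qed.
Lemma sh_le a b : (sh a <= sh b) = (a <= b).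
Proof. by rewrite /sh; case: (a =P 0); case: (b =P 0) => ? ? ; apply/idP/idP; lia. Qed.
Lemma sh_eq0 a : (sh a == 0) = (a == 0).
Proof. by rewrite /sh; case: (a =P 0) => ?; apply/eqP/eqP; lia. Qed.
Lemma sh_eq1 a : (sh a == 1) = false.
Proof. by rewrite /sh; case: (a =P 0) => ?; apply/eqP; lia. Qed.
Lemma sh_le1 a : sh a <= a.+1.
Proof. by rewrite /sh; case: (a =P 0) => ?; lia. Qed.

Lemma par_pos k (T : {set 'I_k * 'I_k}) q p : parent_of T q p ->
  ((q.2 == p.2 :> nat) && (q.1 < p.1)) || ((q.1 == p.1 :> nat) && (q.2 < p.2)).
Proof.
case/and4P=> _ _ _; case: ifP => _ /and3P[h1 h2 _]; move: h1 h2; rewrite !oeq => -> ->; by rewrite ?orbT.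
Qed.

Lemma tri_UD k (T : {set 'I_k * 'I_k}) : upper_diagonal T ->
  forall p : 'I_k * 'I_k, p \in T -> p.1 + p.2 <= k.-1.
Proof.
move=> /forallP UD.
suff H : forall s (p : 'I_k * 'I_k), p \in T -> 2 * k - (p.1 + p.2) <= s -> p.1 + p.2 <= k.-1.
  by move=> p pT; apply: (H (2 * k)) => //; lia.
elim=> [|s IH] p pT hs.
- have := ltn_ord p.1; have := ltn_ord p.2; lia.
- case: (leqP (p.1 + p.2) k.-1) => // hgt.
  have hc : children T p != set0.
    rewrite -cards_eq0; move: (UD p); rewrite /is_leaf pT /=.
    have -> : (p.1 + p.2 == k.-1) = false by apply/negbTE; lia.
    by case: (#|children T p| == 0).
  case/set0Pn: hc => c; rewrite inE => Hc.
  have := par_pos Hc; case/and4P: Hc => cT _ _ _.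
  have := IH c cT; case: c cT => c1 c2 cT /= IHc hpos.
  have : c1 + c2 <= k.-1 by apply: IHc; lia.
  lia.
Qed.

Lemma anti_UD k (T : {set 'I_k * 'I_k}) : upper_diagonal T ->
  forall p : 'I_k * 'I_k, p.1 + p.2 = k.-1 -> p \in T.
Proof.
move=> /forallP UD p hp; move: (UD p); rewrite hp eqxx /is_leaf.
by case: (p \in T).
Qed.

Section Bij.
Variable m : nat.
Notation I2 := ('I_m.+2 * 'I_m.+2)%type.
Notation I3 := ('I_m.+3 * 'I_m.+3)%type.

Definition e (p : I2) : I3 := locked (inord p.1, inord (sh p.2)).
Definition xx : I3 := locked (inord m.+1, inord 1).
Definition yy : I3 := locked (inord m.+2, inord 0).
Definition p0 : I2 := locked (inord m.+1, inord 0).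
Arguments e : simpl never.
Arguments xx : simpl never.
Arguments yy : simpl never.
Arguments p0 : simpl never.
Definition phi (T : {set I2}) : {set I3} := e @: T :|: [set xx; yy].

Lemma e1 p : (e p).1 = p.1 :> nat.
Proof. by rewrite /e -lock /= inordK // ltnS ltnW. Qed.
Lemma e2 p : (e p).2 = sh p.2 :> nat.
Proof. rewrite /e -lock /= inordK //; have := sh_le1 p.2; have := ltn_ord p.2; lia. Qed.
Lemma e1' (p : I2) : nat_of_ord (inord p.1 : 'I_m.+3) = p.1.
Proof. by rewrite inordK // ltnS ltnW. Qed.
Lemma e2' (p : I2) : nat_of_ord (inord (sh p.2) : 'I_m.+3) = sh p.2.
Proof. rewrite inordK //; have := sh_le1 p.2; have := ltn_ord p.2; lia. Qed.
Lemma xx1 : xx.1 = m.+1 :> nat. Proof. by rewrite /xx -lock /= inordK. Qed.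
Lemma xx2 : xx.2 = 1 :> nat. Proof. by rewrite /xx -lock /= inordK. Qed.
Lemma yy1 : yy.1 = m.+2 :> nat. Proof. by rewrite /yy -lock /= inordK. Qed.
Lemma yy2 : yy.2 = 0 :> nat. Proof. by rewrite /yy -lock /= inordK. Qed.
Lemma p01 : p0.1 = m.+1 :> nat. Proof. by rewrite /p0 -lock /= inordK. Qed.
Lemma p02 : p0.2 = 0 :> nat. Proof. by rewrite /p0 -lock /= inordK. Qed.

Lemma inord_I2 (i : 'I_m.+2) : nat_of_ord (inord i : 'I_m.+3) = i.
Proof. by rewrite inordK // ltnS ltnW. Qed.
Ltac crd := rewrite ?oeq ?e1 ?e2 ?e1' ?e2' ?xx1 ?xx2 ?yy1 ?yy2 ?p01 ?p02.
Lemma e_inj : injective e.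
Proof.
move=> p q /eqP; rewrite peq !e1 !e2 sh_eq => H; apply/eqP; by rewrite peq.
Qed.

Lemma exx p : (e p == xx) = false.
Proof. by rewrite peq e2 xx2 sh_eq1 andbF. Qed.
Lemma eyy p : (e p == yy) = false.
Proof. rewrite peq e1 yy1; have := ltn_ord p.1; case: eqP => //=; lia. Qed.
Lemma xxyy : (xx == yy) = false.
Proof. by rewrite peq xx1 yy1 ltn_eqF. Qed.

Lemma in_phi T p' : (p' \in phi T) = (p' \in e @: T) || (p' == xx) || (p' == yy).
Proof. by rewrite !inE orbA. Qed.
Lemma e_phi T p : (e p \in phi T) = (p \in T).
Proof. by rewrite in_phi exx eyy !orbF mem_imset //; exact: e_inj. Qed.
Lemma xx_phi T : xx \in phi T.
Proof. by rewrite in_phi eqxx orbT. Qed.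
Lemma yy_phi T : yy \in phi T.
Proof. by rewrite in_phi eqxx !orbT. Qed.

Lemma ex_phi T (P : pred I3) :
  [exists p' in phi T, P p'] = [exists p in T, P (e p)] || P xx || P yy.
Proof.
apply/idP/idP.
- case/existsP => p' /andP[]; rewrite in_phi => /orP[/orP[/imsetP[p pT ->]|/eqP->]|/eqP->] Pp;
    rewrite ?Pp ?orbT //.
  by apply/orP; left; apply/orP; left; apply/existsP; exists p; rewrite pT.
- case/orP=> [/orP[/existsP[p /andP[pT Pp]]|Px]|Py]; apply/existsP.
  + by exists (e p); rewrite e_phi pT.
  + by exists xx; rewrite xx_phi.
  + by exists yy; rewrite yy_phi.
Qed.

Lemma all_phi T (P : pred I3) :
  [forall p' in phi T, P p'] = [&& [forall p in T, P (e p)], P xx & P yy].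
Proof.
apply/idP/idP.
- move/forallP=> H; apply/and3P; split.
  + by apply/forallP=> p; apply/implyP=> pT; have := H (e p); rewrite e_phi pT.
  + by have := H xx; rewrite xx_phi.
  + by have := H yy; rewrite yy_phi.
- case/and3P=> /forallP H Px Py; apply/forallP=> p'; apply/implyP.
  rewrite in_phi => /orP[/orP[/imsetP[p pT ->]|/eqP->]|/eqP->] //.
  by have := H p; rewrite pT.
Qed.

Definition unsh (c : nat) := if c == 0 then 0 else c.-1.

Lemma decomp (p' : I3) : [\/ exists p, p' = e p, p' = xx, p' = yy |
   ((p'.2 == 1 :> nat) && (p'.1 != m.+1 :> nat)) || ((p'.1 == m.+2 :> nat) && (p'.2 != 0 :> nat))].
Proof.
have b1 := ltn_ord p'.1; have b2 := ltn_ord p'.2.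
case h1: (p'.1 < m.+2); case h2: (p'.2 == 1 :> nat).
- case h3: (p'.1 == m.+1 :> nat).
  + by apply: Or42; apply/eqP; rewrite peq xx1 xx2 h3 h2.
  + by apply: Or44.
- apply: Or41; have hu : unsh p'.2 < m.+2 by rewrite /unsh; case: eqP; lia.
  exists (Ordinal h1, Ordinal hu); apply/eqP; rewrite peq e1 e2 /= eqxx /=.
  by rewrite /sh /unsh; move: h2; case: (nat_of_ord p'.2) => [|[|c]].
- by apply: Or44; have -> : (p'.1 != m.+1 :> nat) by lia.
- case h3: (p'.2 == 0 :> nat).
  + by apply: Or43; apply/eqP; rewrite peq yy1 yy2 h3 andbT; lia.
  + by apply: Or44; rewrite orbC; have -> : (p'.1 == m.+2 :> nat) by lia.
Qed.


Lemma sh0 a : (0 == sh a) = (a == 0).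
Proof. by rewrite eq_sym sh_eq0. Qed.
Lemma sh1 a : (1 == sh a) = false.
Proof. by rewrite eq_sym sh_eq1. Qed.



Definition oth (p' : I3) :=
  ((p'.2 == 1 :> nat) && (p'.1 != m.+1 :> nat)) || ((p'.1 == m.+2 :> nat) && (p'.2 != 0 :> nat)).

Lemma oth_img (A : {set I2}) p' : oth p' -> (p' \in e @: A) = false.
Proof.
move=> H; apply/negbTE/negP => /imsetP[p _ E]; move: H; rewrite /oth E; crd.
rewrite sh_eq1 /=; have := ltn_ord p.1; case: (p.1 =P m.+2 :> nat) => //; lia.
Qed.
Lemma oth_xx p' : oth p' -> (p' == xx) = false.
Proof. by move=> H; apply/negbTE/negP => /eqP E; move: H; rewrite /oth E; crd; lia. Qed.
Lemma oth_yy p' : oth p' -> (p' == yy) = false.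
Proof. by move=> H; apply/negbTE/negP => /eqP E; move: H; rewrite /oth E; crd; lia. Qed.
Lemma oth_phi T p' : oth p' -> (p' \in phi T) = false.
Proof. by move=> H; rewrite in_phi oth_img // oth_xx // oth_yy. Qed.
Lemma xx_img (A : {set I2}) : (xx \in e @: A) = false.
Proof. by apply/negbTE/negP => /imsetP[p _ /eqP]; rewrite eq_sym exx. Qed.
Lemma yy_img (A : {set I2}) : (yy \in e @: A) = false.
Proof. by apply/negbTE/negP => /imsetP[p _ /eqP]; rewrite eq_sym eyy. Qed.

Lemma decomp' (p' : I3) : [\/ exists p, p' = e p, p' = xx, p' = yy | oth p'].
Proof. exact: decomp. Qed.

Section WithT.
Variable T : {set I2}.
Hypothesis Htri : forall p : I2, p \in T -> p.1 + p.2 <= m.+1.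
Hypothesis Hp0 : p0 \in T.

Lemma ha_e (p : I2) : has_above (phi T) (e p) = has_above T p.
Proof.
rewrite /has_above ex_phi /= !oeq xx1 xx2 yy1 yy2 !e1 !e2 sh1 sh0.
have -> : (m.+2 < p.1) = false by apply/negbTE; have := ltn_ord p.1; lia.
rewrite andbF !orbF; apply: eq_existsb => q; by rewrite !oeq !e1 !e2 sh_eq.
Qed.

Lemma hl_e (p : I2) : p.1 + p.2 <= m.+1 -> has_left (phi T) (e p) = has_left T p.
Proof.
move=> hp; rewrite /has_left ex_phi /= !oeq xx1 xx2 yy1 yy2 !e1 !e2.
have -> : (m.+1 == p.1) && (1 < sh p.2) = false.
  by rewrite /sh; case: (nat_of_ord p.2 =P 0) => h; apply/negbTE; lia.
have -> : (m.+2 == p.1) = false by apply/negbTE; have := ltn_ord p.1; lia.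
rewrite !orbF; apply: eq_existsb => q; by rewrite !oeq !e1 !e2 sh_lt.
Qed.

Lemma root_e p : is_root (e p) = is_root p.
Proof. by rewrite /is_root e1 e2 sh_eq0. Qed.
Lemma root_xx : is_root xx = false.
Proof. by rewrite /is_root xx1. Qed.
Lemma root_yy : is_root yy = false.
Proof. by rewrite /is_root yy1. Qed.

Lemma ha_xx : has_above (phi T) xx = false.
Proof.
rewrite /has_above ex_phi /= !oeq xx1 xx2 yy1 yy2 ltnn andbF !orbF.
apply/negbTE/existsP => -[q /andP[_]]; by rewrite !oeq e2 xx2 sh_eq1.
Qed.
Lemma hl_xx : has_left (phi T) xx = true.
Proof.
rewrite /has_left ex_phi /=; apply/orP; left; apply/orP; left.
apply/existsP; exists p0; by rewrite Hp0 !oeq e1 e2 xx1 xx2 p01 p02 eqxx.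
Qed.
Lemma ha_yy : has_above (phi T) yy = true.
Proof.
rewrite /has_above ex_phi /=; apply/orP; left; apply/orP; left.
apply/existsP; exists p0; rewrite Hp0 !oeq ?e1 ?e2 ?e1' ?e2' ?xx1 ?xx2 ?yy1 ?yy2 ?p01 ?p02 ?eqxx. by rewrite ltnSn.
Qed.
Lemma hl_yy : has_left (phi T) yy = false.
Proof.
rewrite /has_left ex_phi /= !oeq xx1 xx2 yy1 yy2 ltnn andbF orbF.
have -> : (m.+1 == m.+2) = false by rewrite ltn_eqF.
rewrite andFb orbF.
apply/negbTE/existsP => -[q /andP[_]]; rewrite !oeq e1 yy1.
by have := ltn_ord q.1; case: eqP => //=; lia.
Qed.


Lemma par_ee (q p : I2) : parent_of (phi T) (e q) (e p) = parent_of T q p.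
Proof.
rewrite /parent_of !e_phi root_e ha_e.
case pT: (p \in T); last by [].
rewrite !all_phi; congr (_ && (_ && (_ && _))).
case: (has_above T p).
- crd; rewrite sh1 sh0 sh_eq.
  have -> : (m.+2 < p.1) = false by apply/negbTE; have := ltn_ord p.1; lia.
  rewrite andbF /= andbT; congr (_ && (_ && _)).
  by apply: eq_forallb => r; crd; rewrite sh_eq.
- crd; rewrite !sh_lt.
  have -> : (m.+1 == p.1) && (1 < sh p.2) = false.
    by have := Htri pT; rewrite /sh; case: ifP => /eqP h H; apply/negP => /andP[/eqP E F]; lia.
  have -> : (m.+2 == p.1 :> nat) = false by apply/negbTE; have := ltn_ord p.1; lia.
  rewrite /= andbT; congr (_ && (_ && _)).
  by apply: eq_forallb => r; crd; rewrite sh_lt sh_le.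
Qed.

Lemma par_exx (q : I2) : parent_of (phi T) (e q) xx = (q \in T) && (q == p0).
Proof.
rewrite /parent_of xx_phi e_phi root_xx ha_xx /=.
have -> : [forall r in phi T, (r.1 == xx.1) && (r.2 < xx.2) ==> (r.2 <= (e q).2)].
  apply/forallP => r; apply/implyP => _; apply/implyP => /andP[_]; rewrite xx2; lia.
rewrite andbT peq p01 p02; crd; congr (_ && (_ && _)).
rewrite /sh; case: ifP => /eqP h; apply/idP/idP; lia.
Qed.

Lemma par_eyy (q : I2) : parent_of (phi T) (e q) yy = (q \in T) && (q == p0).
Proof.
rewrite /parent_of yy_phi e_phi root_yy ha_yy /=.
rewrite peq all_phi; crd; rewrite sh_eq0 ltnn andbF /= ltn_ord andbT.
case: (q \in T) => //=; rewrite andbC; congr (_ && _).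
apply/idP/idP.
- move/forallP/(_ p0); rewrite Hp0 /=; crd; rewrite sh_eq0 eqxx /= ltnSn /= => H.
  have := ltn_ord q.1; lia.
- move/eqP=> Hq; apply/forallP => r; apply/implyP => _; apply/implyP => /andP[_].
  crd; lia.
Qed.

Lemma ch_xx : children (phi T) xx = set0.
Proof.
apply/setP => p'; rewrite !inE; apply/negbTE/negP => H.
have := par_pos H; case/and4P: H => pin _ _ _.
rewrite in_phi in pin; case/orP: pin => [/orP[/imsetP[p pT ->]|/eqP->]|/eqP->]; crd; try lia.
have := Htri pT; rewrite /sh; case: ifP => /eqP h; lia.
Qed.

Lemma ch_yy : children (phi T) yy = set0.
Proof.
apply/setP => p'; rewrite !inE; apply/negbTE/negP => H.
have := par_pos H; case/and4P: H => pin _ _ _.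
rewrite in_phi in pin; case/orP: pin => [/orP[/imsetP[p pT ->]|/eqP->]|/eqP->]; crd; try lia.
case: p pT => a b pT /=; have := ltn_ord a; lia.
Qed.


Lemma ch_p0 : children T p0 = set0.
Proof.
apply/setP => p; rewrite !inE; apply/negbTE/negP => H.
have := par_pos H; case/and4P: H => pT _ _ _; have := Htri pT.
crd; case: p pT => a b pT /=; lia.
Qed.

Lemma ch_e (q : I2) : q \in T ->
  children (phi T) (e q) = if q == p0 then [set xx; yy] else e @: children T q.
Proof.
move=> qT; apply/setP => p'; rewrite inE.
case: (decomp' p') => [[p ->]| -> | -> | H].
- rewrite par_ee; case: ifP => [/eqP->|_].
  + by rewrite !inE exx eyy; have := ch_p0; move/setP/(_ p); rewrite !inE.
  + by rewrite mem_imset ?inE //; exact: e_inj.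
- by rewrite par_exx qT /=; case: ifP => _; rewrite ?inE ?eqxx ?xx_img.
- by rewrite par_eyy qT /=; case: ifP => _; rewrite ?inE ?eqxx ?orbT ?yy_img.
- have -> : parent_of (phi T) (e q) p' = false.
    by apply/negbTE/negP => /and4P[]; rewrite oth_phi.
  by case: ifP => _; rewrite ?inE ?oth_xx ?oth_yy ?oth_img.
Qed.

Lemma card_ch_e (q : I2) : q \in T ->
  #|children (phi T) (e q)| = if q == p0 then 2 else #|children T q|.
Proof.
move=> qT; rewrite ch_e //; case: ifP => _.
- by rewrite cards2 xxyy.
- by rewrite card_imset //; exact: e_inj.
Qed.


Lemma inT_phi a b : inT (phi T) a b =
  [exists p in T, (p.1 == a :> nat) && (sh p.2 == b)] || ((m.+1 == a) && (1 == b)) || ((m.+2 == a) && (0 == b)).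
Proof.
rewrite /inT ex_phi; crd; congr (_ || _ || _).
by apply: eq_existsb => p; crd.
Qed.

Lemma inT_00 : inT (phi T) 0 0 = inT T 0 0.
Proof.
rewrite inT_phi /= !orbF /inT; apply: eq_existsb => p; by rewrite sh_eq0.
Qed.

Lemma inT_sh a b : a <= m -> inT (phi T) a (sh b) = inT T a b.
Proof.
move=> ha; rewrite inT_phi sh1 andbF orbF.
have -> : (m.+2 == a) = false by apply/negbTE; lia.
rewrite andFb orbF /inT; apply: eq_existsb => p; by rewrite sh_eq.
Qed.

Lemma inT_m1 : inT (phi T) m 1 = false.
Proof.
rewrite inT_phi eqxx andbT.
have -> : (m.+1 == m) = false by apply/negbTE; lia.
have -> : (m.+2 == m) = false by apply/negbTE; lia.
rewrite !orbF; apply/negbTE/existsP => -[p /andP[_ /andP[_]]]; by rewrite sh_eq1.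
Qed.

Lemma inT_p0 : inT (phi T) m.+1 0 = true.
Proof.
rewrite inT_phi; apply/orP; left; apply/orP; left; apply/existsP; exists p0.
by rewrite Hp0; crd; rewrite eqxx.
Qed.

Lemma C2_phi :
  [forall p in phi T, ~~ is_root p ==> (has_above (phi T) p != has_left (phi T) p)] =
  [forall p in T, ~~ is_root p ==> (has_above T p != has_left T p)].
Proof.
rewrite all_phi root_xx root_yy ha_xx hl_xx ha_yy hl_yy /= !andbT.
apply: eq_forallb => p; case pT: (p \in T) => //=.
by rewrite root_e ha_e hl_e // Htri.
Qed.

Lemma C4_phi :
  [forall q in phi T, (#|children (phi T) q| == 0) || (#|children (phi T) q| == 2)] =
  [forall q in T, (#|children T q| == 0) || (#|children T q| == 2)].
Proof.
rewrite all_phi ch_xx ch_yy cards0 /= !andbT.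
apply: eq_forallb => q; case qT: (q \in T) => //=.
rewrite card_ch_e //; case: ifP => // /eqP->.
by rewrite ch_p0 cards0.
Qed.


Lemma rows_phi : [forall i : 'I_m.+3, [exists p in phi T, p.1 == i]] =
                 [forall i : 'I_m.+2, [exists p in T, p.1 == i]].
Proof.
apply/idP/idP.
- move/forallP => H; apply/forallP => i; have := H (inord i).
  rewrite ex_phi => /orP[/orP[/existsP[p /andP[pT E]]|E]|E].
  + apply/existsP; exists p; rewrite pT /=; move: E; crd; by rewrite inord_I2.
  + apply/existsP; exists p0; rewrite Hp0 /=; move: E; crd; rewrite inord_I2; lia.
  + move: E; crd; rewrite inord_I2; have := ltn_ord i; lia.
- move/forallP => H; apply/forallP => i; rewrite ex_phi.
  case: (ltnP i m.+2) => hi.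
  + have /existsP[p /andP[pT E]] := H (Ordinal hi).
    apply/orP; left; apply/orP; left; apply/existsP; exists p; rewrite pT /=.
    by move: E; crd.
  + apply/orP; right; crd; have := ltn_ord i; lia.
Qed.

Lemma cols_phi : [forall i : 'I_m.+3, [exists p in phi T, p.2 == i]] =
                 [forall i : 'I_m.+2, [exists p in T, p.2 == i]].
Proof.
apply/idP/idP.
- move/forallP => H; apply/forallP => i.
  have hs : sh i < m.+3 by have := sh_le1 i; have := ltn_ord i; lia.
  have := H (Ordinal hs).
  rewrite ex_phi => /orP[/orP[/existsP[p /andP[pT E]]|E]|E].
  + apply/existsP; exists p; rewrite pT /=; move: E; crd; by rewrite sh_eq.
  + by move: E; crd; rewrite /= sh1.
  + apply/existsP; exists p0; rewrite Hp0 /=; move: E; crd; rewrite /= sh0; lia.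
- move/forallP => H; apply/forallP => i; rewrite ex_phi.
  case: (i =P 1 :> nat) => h1.
  + by apply/orP; left; apply/orP; right; crd; rewrite h1.
  have hi : (i.-1 < m.+2) by have := ltn_ord i; lia.
  have /existsP[p /andP[pT E]] := H (Ordinal hi).
  apply/orP; left; apply/orP; left; apply/existsP; exists p; rewrite pT /=.
  move: E; crd; rewrite /= /sh => /eqP->; case: ifP => /eqP; lia.
Qed.

Lemma sum_e (p : I2) : p != p0 -> (p.1 + sh p.2 == m.+2) = (p.1 + p.2 == m.+1).
Proof.
rewrite peq p01 p02 /sh => H; have := ltn_ord p.1; case: ifP => /eqP h hp; apply/idP/idP; move: H; lia.
Qed.

Lemma Q_e (p : I2) :
  (is_leaf (phi T) (e p) == ((e p).1 + (e p).2 == m.+2)) = (is_leaf T p == (p.1 + p.2 == m.+1)).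
Proof.
rewrite /is_leaf e_phi; crd.
case pT: (p \in T) => /=.
- rewrite card_ch_e //; case: ifP => [/eqP->|hp].
  + by rewrite ch_p0 cards0; crd; rewrite /sh /= !addn0 (ltn_eqF (ltnSn m.+1)) !eqxx.
  + by rewrite sum_e ?hp.
- rewrite sum_e //; apply/negP => /eqP E; by rewrite E Hp0 in pT.
Qed.

Lemma UD_phi' : upper_diagonal (phi T) = upper_diagonal T.
Proof.
rewrite /upper_diagonal; apply/idP/idP.
- move/forallP => H; apply/forallP => p; rewrite -Q_e; exact: H.
- move/forallP => H; apply/forallP => p'.
  case: (decomp' p') => [[p ->]| -> | -> | Ho].
  + by rewrite Q_e.
  + by rewrite /is_leaf xx_phi ch_xx cards0; crd; rewrite addn1 /= !eqxx.
  + by rewrite /is_leaf yy_phi ch_yy cards0; crd; rewrite addn0 /= !eqxx.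
  + rewrite /is_leaf oth_phi //=; move: Ho; rewrite /oth /=; lia.
Qed.


Lemma UD_phi : is_UDCNM (phi T) = is_UDCNM T.
Proof.
by rewrite /is_UDCNM /is_CNM inT_00 C2_phi rows_phi cols_phi C4_phi UD_phi'.
Qed.

End WithT.

Lemma forall_ordS k (P : nat -> bool) :
  [forall a : 'I_k.+1, P a] = [forall a : 'I_k, P a] && P k.
Proof.
apply/idP/idP.
- move/forallP => H; apply/andP; split.
  + by apply/forallP => a; exact: (H (widen_ord (leqnSn k) a)).
  + exact: (H ord_max).
- case/andP => /forallP H Pk; apply/forallP => a.
  case: (ltnP a k) => ha.
  + exact: (H (Ordinal ha)).
  + by have -> : nat_of_ord a = k by have := ltn_ord a; lia.
Qed.

Definition S := [set T : {set I2} | is_UDCNM T && [forall a : 'I_m, ~~ inT T a (m - a)]].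
Definition B := [set T' : {set I3} |
  [&& is_UDCNM T', [forall a : 'I_m.+1, ~~ inT T' a (m.+1 - a)] & inT T' m.+1 0]].

Lemma phi_inj : injective phi.
Proof. by move=> T1 T2 H; apply/setP => p; rewrite -!(e_phi _ p) H. Qed.

Lemma shma a : a < m -> m.+1 - a = sh (m - a).
Proof. by move=> h; rewrite /sh; case: ifP => /eqP; lia. Qed.

Lemma B_eq : B = phi @: S.
Proof.
apply/setP => T'; rewrite !inE; apply/idP/imsetP.
- case/and3P => U F I.
  have U' := U; case/andP: U' => C UD.
  have triT' := tri_UD UD.
  have Hx : xx \in T' by apply: anti_UD => //; crd; simpl; lia.
  have Hy : yy \in T' by apply: anti_UD => //; crd; simpl; lia.
  have Hp0' : e p0 \in T'.
    case/existsP: I => p /and3P[pT /eqP h1 /eqP h2].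
    suff -> : e p0 = p by [].
    by apply/eqP; rewrite peq; crd; move: h1 h2; case: p {pT} => a b /= -> ->; rewrite /sh /= !eqxx.
  have col1 : forall p' : I3, p' \in T' -> p'.2 = 1 :> nat -> p'.1 = m.+1 :> nat.
    move=> p' pT h2; have := triT' _ pT; rewrite h2 /= => ht.
    case: (ltnP p'.1 m.+1) => h1; last by lia.
    case/and4P: C => _ /forallP/(_ xx) + _ _; rewrite Hx /= root_xx /=.
    have -> : has_above T' xx.
      by apply/existsP; exists p'; rewrite pT; crd; rewrite h2 eqxx.
    have -> : has_left T' xx.
      by apply/existsP; exists (e p0); rewrite Hp0'; crd; rewrite eqxx.
    by [].
  set T := [set p | e p \in T'].
  have HT : phi T = T'.
    apply/setP => p'; rewrite in_phi; case: (decomp' p') => [[p ->]| -> | -> | Ho].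
    + by rewrite exx eyy !orbF mem_imset ?inE //; exact: e_inj.
    + by rewrite eqxx orbT Hx.
    + by rewrite eqxx orbT Hy.
    + rewrite oth_img // oth_xx // oth_yy //=; apply/esym/negbTE/negP => pT.
      move: Ho; rewrite /oth; case/orP => /andP[/eqP h1 h2].
      * by move: h2; rewrite (col1 _ pT h1) eqxx.
      * have := triT' _ pT; rewrite h1 /=; lia.
  have triT : forall p : I2, p \in T -> p.1 + p.2 <= m.+1.
    move=> p; rewrite inE => /triT'; crd; rewrite /sh /=; case: ifP => /eqP h; have := ltn_ord p.1; lia.
  have Hp0 : p0 \in T by rewrite inE.
  exists T => //; rewrite inE -(UD_phi triT Hp0) HT U /=.
  apply/forallP => a; have := forallP F (widen_ord (leqnSn m) a).
  by rewrite /= shma // -HT inT_sh //; have := ltn_ord a; lia.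
- case=> T; rewrite inE => /andP[U F] ->.
  have U' := U; case/andP: U' => C UD.
  have triT := tri_UD UD.
  have Hp0 : p0 \in T by apply: anti_UD => //; crd; simpl; lia.
  rewrite UD_phi // U inT_p0 // andbT /= (forall_ordS m (fun a => ~~ inT (phi T) a (m.+1 - a))); apply/andP; split.
  + apply/forallP => a; rewrite shma // inT_sh //; last by have := ltn_ord a; lia.
    exact: (forallP F a).
  + by rewrite subSn // subnn inT_m1.
Qed.

End Bij.

Local Open Scope ring_scope.

Theorem lemma4p9 (n : nat) : (2 <= n)%N ->
  (f n n.-1)%:Z = (f n.+1 n.-1)%:Z - (f n (n - 2))%:Z.
Proof.
case: n => [|[|m]] // _.
have -> : (m.+2 - 2 = m)%N by lia.
rewrite [(m.+2).-1]/=.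
have hB : (f m.+3 m.+1 = #|S m|)%N.
  rewrite -(card_imset _ (@phi_inj m)) -B_eq; apply: eq_card => T; rewrite !inE.
  have -> : (m.+3 - 2 - m.+1 = 0)%N by lia.
  rewrite ltnSn /=.
  have -> : [forall a : 'I_m.+1, ~~ inT T a (m.+3 - 2 - a)%N] = [forall a : 'I_m.+1, ~~ inT T a (m.+1 - a)%N].
    by apply: eq_forallb => a; rewrite (_ : (m.+3 - 2 - a = m.+1 - a)%N) //; lia.
  by [].
have hF : forall T : {set 'I_m.+2 * 'I_m.+2},
    [forall a : 'I_m, ~~ inT T a (m.+2 - 2 - a)%N] = [forall a : 'I_m, ~~ inT T a (m - a)%N].
  by move=> T; apply: eq_forallb => a; rewrite (_ : (m.+2 - 2 - a = m - a)%N) //; lia.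
have h1 : (f m.+2 m.+1 = #|S m :\: [set T | inT T m 0]|)%N.
  apply: eq_card => T; rewrite !inE.
  rewrite (forall_ordS m (fun a => ~~ inT T a (m.+2 - 2 - a)%N)) hF ltnn /=.
  have -> : (m.+2 - 2 - m = 0)%N by lia.
  by case: (is_UDCNM T); case: (inT T m 0); rewrite ?andbF ?andbT.
have h2 : (f m.+2 m = #|S m :&: [set T | inT T m 0]|)%N.
  apply: eq_card => T; rewrite !inE hF ltnSn /=.
  have -> : (m.+2 - 2 - m = 0)%N by lia.
  by case: (is_UDCNM T); case: (inT T m 0); rewrite ?andbF ?andbT.
rewrite hB h1 h2 -(cardsID [set T | inT T m 0] (S m)).
lia.
Qed.
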